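(* For every $k\in\pm\mathcal K^{(\ell)}$ we have $(\chi_k)^\dagger=\chi_{-k}$, and for all $k_1,k_2\in\pm\mathcal K^{(\ell)}$ we have $\chi_{k_1}\chi_{k_2}+\chi_{k_2}\chi_{k_1}=\delta_{k_1,-k_2}\,\mathrm{id}$.
   Context: Fix integers $a<0<b$, $\ell=b-a$, $\mathcal K^{(\ell)}=\{\frac12,\frac32,\dots,\ell-\frac12\}$, $\pm\mathcal K^{(\ell)}=\mathcal K^{(\ell)}\cup(-\mathcal K^{(\ell)})$, $C=\{a,\dots,b\}$, $C^*=\{a+\frac12,\dots,b-\frac12\}$. $\tilde V$ is the complex inner product space with orthonormal basis $(e_\rho)_{\rho\in\{\pm1\}^C}$, $\dagger$ the adjoint. For $x'\in C^*$, $\varsigma_{x'}(\rho)$ flips the signs of $\rho_x$, $x<x'$; $\psi_{x'}e_\rho=\frac{-\rho_{x'-1/2}+i\rho_{x'+1/2}}{\sqrt2}e_{\varsigma_{x'}(\rho)}$, $\psi^*_{x'}e_\rho=\frac{-i\rho_{x'-1/2}+\rho_{x'+1/2}}{\sqrt2}e_{\varsigma_{x'}(\rho)}$. Eigenfunctions: on the lattice strip with vertices $C\times\mathbb Z\subset\mathbb C$ and nearest-neighbour edges (identified with midpoints), a function $F$ is s-holomorphic if $F(z_1)+\frac{i|v-p|}{v-p}\overline{F(z_1)}=F(z_2)+\frac{i|v-p|}{v-p}\overline{F(z_2)}$ for edges $z_1,z_2$ adjacent to a common vertex $v$ and face with centre $p$, and has Riemann boundary values if $F(a+iy')\in e^{-i\pi/4}\mathbb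 R$, $F(b+iy')\in e^{i\pi/4}\mathbb R$. For $k\in\mathcal K^{(\ell)}$ let $\omega_k\in((k-\frac12)\pi/\ell,k\pi/\ell)$ solve $\cos((\ell+\frac12)\omega)/\cos((\ell-\frac12)\omega)=3-2\sqrt2$ and $\lambda_{\pm k}=(2-\cos\omega_k+\sqrt{(3-\cos\omega_k)(1-\cos\omega_k)})^{\pm1}$. $F_{\pm k}$ is the unique s-holomorphic function with Riemann boundary values, $F_{\pm k}(z+ih)=\lambda_{\pm k}^hF_{\pm k}(z)$, values in $e^{-i\pi/4}\mathbb R_{>0}$ on the edges $a+iy'$, and whose restriction $f_{\pm k}$ to $C^*$ (horizontal edges at height $0$) has unit norm in the real Hilbert space $H=\mathbb C^{C^*}$ with $\langle f,g\rangle=\mathrm{Re}\sum_{x'}f(x')\overline{g(x')}$. Known facts: $(f_k)_{k\in\pm\mathcal K^{(\ell)}}$ is an orthonormal basis of $H$ and $f_{-k}=-i\overline{f_k}$. Modes: $\chi_k=\frac{e^{i\pi/4}}{2}\sum_{x'\in C^*}\big(i f_k(x')\psi_{x'}-i\overline{f_k(x')}\psi^*_{x'}\big)$ for $k\in\pm\mathcal K^{(\ell)}$. *)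

(* Defs.v *)
From mathcomp Require Import all_boot all_order all_algebra.
From mathcomp Require Import complex.
From mathcomp Require Import reals trigo.

Set Implicit Arguments.
Unset Strict Implicit.
Unset Printing Implicit Defensive.

Import Order.TTheory GRing.Theory Num.Theory ComplexField.
Local Open Scope ring_scope.
Local Open Scope complex_scope.

Definition ell (a b : int) : nat := `|b - a|%N.

Definition eipi4 (R : realType) : R[i] :=
  ((Num.sqrt (2 : R))^-1)%:C * (1 + 'i).

Definition inK (R : realType) (l : nat) (k : R) : Prop :=
  exists j : 'I_l, k = (j%:R : R) + 2^-1.

Definition inPMK (R : realType) (l : nat) (k : R) : Prop :=
  inK l k \/ inK l (- k).

Definition lambda_of (R : realType) (w : R) : R :=
  2 - cos w + Num.sqrt ((3 - cos w) * (1 - cos w)).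

(* HE x y : horizontal edge from x + iy to (x+1) + iy, midpoint (x+1/2) + iy
   VE x y : vertical edge from x + iy to x + i(y+1),  midpoint x + i(y+1/2) *)
Inductive edge := HE of int & int | VE of int & int.

Definition valid_edge (a b : int) (e : edge) : bool :=
  match e with
  | HE x _ => (a <= x) && (x < b)
  | VE x _ => (a <= x) && (x <= b)
  end.

Definition endpoint (e : edge) (vx vy : int) : bool :=
  match e with
  | HE x y => ((vx == x) || (vx == x + 1)) && (vy == y)
  | VE x y => (vx == x) && ((vy == y) || (vy == y + 1))
  end.

(* e is one of the four sides of the face with centre (px+1/2) + i(py+1/2) *)
Definition side (e : edge) (px py : int) : bool :=
  match e with
  | HE x y => (x == px) && ((y == py) || (y == py + 1))
  | VE x y => ((x == px) || (x == px + 1)) && (y == py)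
  end.

Definition shift (h : int) (e : edge) : edge :=
  match e with
  | HE x y => HE x (y + h)
  | VE x y => VE x (y + h)
  end.

Definition s_holomorphic (R : realType) (a b : int) (F : edge -> R[i]) : Prop :=
  forall (z1 z2 : edge) (vx vy px py : int),
    valid_edge a b z1 -> valid_edge a b z2 ->
    (a <= vx <= b) -> (a <= px < b) ->
    endpoint z1 vx vy -> endpoint z2 vx vy ->
    side z1 px py -> side z2 px py ->
    let d : R[i] := ((vx - px)%:~R - 2^-1)%:C + 'i * ((vy - py)%:~R - 2^-1)%:C in
    let c : R[i] := 'i * `|d| / d in
    F z1 + c * (F z1)^* = F z2 + c * (F z2)^*.

Definition riemann_bv (R : realType) (a b : int) (F : edge -> R[i]) : Prop :=
  forall y : int,
    (exists r : R, F (VE a y) = (eipi4 R)^* * r%:C) /\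
    (exists r : R, F (VE b y) = eipi4 R * r%:C).

Definition translation_eigen (R : realType) (a b : int) (F : edge -> R[i])
  (lam : R) : Prop :=
  forall (e : edge) (h : int), valid_edge a b e ->
    F (shift h e) = (lam%:C) ^ h * F e.

Definition left_positive (R : realType) (a : int) (F : edge -> R[i]) : Prop :=
  forall y : int, exists r : R, 0 < r /\ F (VE a y) = (eipi4 R)^* * r%:C.

(* C* = {a+1/2,...,b-1/2}; the point a + j + 1/2 is indexed by j : 'I_l *)

Definition restrict (R : realType) (a : int) (l : nat) (F : edge -> R[i])
  : 'I_l -> R[i] := fun j => F (HE (a + (j : nat)%:Z) 0).

Arguments restrict [R] a l F _.

Definition fmode (R : realType) (a b : int) (F : R -> edge -> R[i]) (k : R)
  : 'I_(ell a b) -> R[i] := restrict a (ell a b) (F k).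

Arguments fmode [R] a b F k _.

Definition innerH (R : realType) (l : nat) (f g : 'I_l -> R[i]) : R :=
  complex.Re (\sum_(j < l) f j * (g j)^*).

(* C = {a,...,b}: the site a + i is indexed by i : 'I_l.+1,             *)
(* and a spin configuration is encoded by booleans (true = +1).          *)
(* Vectors are coordinate functions, operators are matrices              *)
(* A sigma rho = coefficient of e_sigma in A e_rho.                      *)

Definition state (l : nat) := {ffun 'I_l.+1 -> bool}.

Definition spin (R : realType) (s : bool) : R[i] := if s then 1 else -1.

Definition vec (R : realType) (l : nat) := state l -> R[i].
Definition op (R : realType) (l : nat) := state l -> state l -> R[i].

Definition app (R : realType) (l : nat) (A : op R l) (u : vec R l) : vec R l :=
  fun sigma => \sum_(rho : state l) A sigma rho * u rho.

Definition inner (R : realType) (l : nat) (u v : vec R l) : R[i] :=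
  \sum_(rho : state l) (u rho)^* * v rho.

(* the sites x - 1/2 and x + 1/2 around x' = a + j + 1/2 *)
Definition site_left (l : nat) (j : 'I_l) : 'I_l.+1 := widen_ord (leqnSn l) j.
Definition site_right (l : nat) (j : 'I_l) : 'I_l.+1 := lift ord0 j.

(* varsigma_{x'} : flips the spins rho_x, x < x' *)
Definition flip (l : nat) (j : 'I_l) (rho : state l) : state l :=
  [ffun i : 'I_l.+1 => if (i <= j)%N then ~~ rho i else rho i].

Definition psi (R : realType) (l : nat) (j : 'I_l) : op R l :=
  fun sigma rho =>
    (sigma == flip j rho)%:R *
    ((- spin R (rho (site_left j)) + 'i * spin R (rho (site_right j)))
       / (Num.sqrt (2 : R))%:C).

Definition psistar (R : realType) (l : nat) (j : 'I_l) : op R l :=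
  fun sigma rho =>
    (sigma == flip j rho)%:R *
    ((- 'i * spin R (rho (site_left j)) + spin R (rho (site_right j)))
       / (Num.sqrt (2 : R))%:C).

Definition chi (R : realType) (l : nat) (f : 'I_l -> R[i]) : op R l :=
  fun sigma rho =>
    eipi4 R / 2 *
    \sum_(j < l) ('i * f j * psi R j sigma rho - 'i * (f j)^* * psistar R j sigma rho).

(* Main.v *)
Require Import Defs.
From mathcomp Require Import all_boot all_order all_algebra.
From mathcomp Require Import complex.
From mathcomp Require Import reals trigo.
From mathcomp Require Import ring.
Import Order.TTheory GRing.Theory Num.Theory ComplexField.
Local Open Scope ring_scope.
Local Open Scope complex_scope.

Notation cj := (@Num.conj _).

Section Aux.
Variable R : realType.
Local Notation C := (R[i]).
Local Notation iC := (@Complex R 0 1).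
Local Notation sq2 := (((Num.sqrt (2:R))%:C)^-1 : C).

Lemma ci : (iC)^* = - iC.
Proof. by apply/eqP; rewrite eq_complex /= oppr0 !eqxx. Qed.

Lemma hi : iC * iC = -1.
Proof. by rewrite -expr2 sqr_i. Qed.

Lemma hiN : (Num.imaginary : C) * Num.imaginary = -1.
Proof. exact: hi. Qed.

Lemma ciN : (Num.imaginary : C)^* = - Num.imaginary.
Proof. exact: ci. Qed.

Lemma hu : (2^-1 : C) * 2 = 1.
Proof. by rewrite mulVf // pnatr_eq0. Qed.

Lemma ht : sq2 * sq2 = 2^-1.
Proof. rewrite -invfM -rmorphM -expr2 sqr_sqrtr // rmorph_nat. reflexivity. Qed.

Lemma eipi4E : eipi4 R = sq2 * (1 + (Num.imaginary : C)).
Proof. by rewrite /eipi4 fmorphV. Qed.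

Lemma spinN b : spin R (~~ b) = - spin R b.
Proof. by case: b; rewrite /spin ?opprK. Qed.

Lemma spinJ b : (spin R b)^* = spin R b.
Proof. by case: b; rewrite /spin ?rmorphN rmorph1. Qed.


Lemma u2J : (2^-1 : C)^* = 2^-1.
Proof. by rewrite fmorphV rmorph_nat. Qed.

End Aux.

Section Main.
Variable R : realType.
Local Notation C := (R[i]).

Definition Acoef {l : nat} (f : 'I_l -> R[i]) (j : 'I_l) (rho : state l) : R[i] :=
  eipi4 R / 2 * ('i * f j * ((- spin R (rho (site_left j)) + 'i * spin R (rho (site_right j)))
       / (Num.sqrt (2 : R))%:C) - 'i * (cj (f j)) * ((- 'i * spin R (rho (site_left j)) + spin R (rho (site_right j)))
       / (Num.sqrt (2 : R))%:C)).

Lemma chi_eq l (f : 'I_l -> C) sigma rho :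
  chi f sigma rho = \sum_(j < l) (sigma == flip j rho)%:R * Acoef f j rho.
Proof.
rewrite /chi mulr_sumr; apply: eq_bigr => j _; rewrite /psi /psistar /Acoef.
ring.
Qed.

Lemma flipK l (j : 'I_l) : involutive (flip j).
Proof. by move=> rho; apply/ffunP => i; rewrite !ffunE; case: (i <= j)%N; rewrite ?negbK. Qed.

Lemma flipC l (j m : 'I_l) rho : flip j (flip m rho) = flip m (flip j rho).
Proof. by apply/ffunP => i; rewrite !ffunE; case: (i <= j)%N; case: (i <= m)%N. Qed.

Lemma flip_eq l (j : 'I_l) sigma rho : (sigma == flip j rho) = (rho == flip j sigma).
Proof. by apply/eqP/eqP => ->; rewrite flipK. Qed.

Lemma flipL l (j m : 'I_l) rho :
  flip m rho (site_left j) = if (j <= m)%N then ~~ rho (site_left j) else rho (site_left j).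
Proof. by rewrite ffunE. Qed.

Lemma flipR l (j m : 'I_l) rho :
  flip m rho (site_right j) = if (j < m)%N then ~~ rho (site_right j) else rho (site_right j).
Proof. by rewrite ffunE /= /bump /= add1n. Qed.

Lemma A_flip l (f : 'I_l -> C) (j m : 'I_l) rho : m != j ->
  Acoef f j (flip m rho) = (if (j < m)%N then -1 else 1) * Acoef f j rho.
Proof.
move=> hmj; rewrite /Acoef flipL flipR.
case: (ltngtP j m) => h.
- rewrite !spinN. ring.
- ring.
- by move/eqP: hmj; case; apply: val_inj.
Qed.

Lemma NcM (x y : C) : cj (x * y) = cj x * cj y. Proof. exact: rmorphM. Qed.
Lemma NcD (x y : C) : cj (x + y) = cj x + cj y. Proof. exact: rmorphD. Qed.
Lemma NcB (x y : C) : cj (x - y) = cj x - cj y. Proof. exact: rmorphB. Qed.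
Lemma NcN (x : C) : cj (- x) = - cj x. Proof. exact: rmorphN. Qed.
Lemma Nc1 : cj (1 : C) = 1. Proof. exact: rmorph1. Qed.
Lemma Nc_nat n : cj (n%:R : C) = n%:R. Proof. exact: rmorph_nat. Qed.
Lemma Nc_sum (I : finType) (F : I -> C) : cj (\sum_i F i) = \sum_i cj (F i).
Proof. exact: rmorph_sum. Qed.
Lemma ciN' : cj (Num.imaginary : C) = - Num.imaginary. Proof. exact: ci. Qed.
Lemma spinJ' b : cj (spin R b) = spin R b. Proof. exact: spinJ. Qed.
Lemma NcK (x : C) : cj (cj x) = x. Proof. exact: conjCK. Qed.

Definition Bc {l : nat} (f : 'I_l -> R[i]) (j : 'I_l) (rho : state l) : R[i] :=
  'i * f j * (- spin R (rho (site_left j)) + 'i * spin R (rho (site_right j)))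
  - 'i * (cj (f j)) * (- 'i * spin R (rho (site_left j)) + spin R (rho (site_right j))).

Definition cc : C := (1 + 'i) * 2^-1 * 2^-1.

Lemma Acoef_E l (f : 'I_l -> C) j rho : Acoef f j rho = cc * Bc f j rho.
Proof.
rewrite /Acoef eipi4E /cc /Bc.
set t := ((Num.sqrt (2:R))%:C)^-1. set u := (2^-1 : C).
transitivity ((1 + 'i) * (t * t) * u *
  ('i * f j * (- spin R (rho (site_left j)) + 'i * spin R (rho (site_right j)))
  - 'i * (cj (f j)) * (- 'i * spin R (rho (site_left j)) + spin R (rho (site_right j))))).
  ring.
rewrite /t ht. reflexivity.
Qed.

Lemma cc2 : cc * cc * 4 = 'i * 2^-1.
Proof.
rewrite /cc.
have h : (1 + 'i) * (1 + 'i) = 2 * 'i :> C.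
  have h4 := hiN R. ring: h4.
transitivity ((1 + 'i) * (1 + 'i) * (2^-1 * 2^-1 * 2^-1 * 2^-1) * 4 : C).
  ring.
by rewrite h; field.
Qed.

Lemma B_diag l (f1 f2 : 'I_l -> C) (j : 'I_l) s :
  Bc f1 j (flip j s) * Bc f2 j s + Bc f2 j (flip j s) * Bc f1 j s
  = 4 * (f1 j * f2 j - (cj (f1 j)) * (cj (f2 j))).
Proof.
rewrite /Bc flipL flipR leqnn ltnn !spinN.
have h4 := hiN R.
case: (s (site_left j)); case: (s (site_right j)); rewrite /spin; ring: h4.
Qed.

Lemma A_diag l (f1 f2 : 'I_l -> C) (j : 'I_l) s :
  Acoef f1 j (flip j s) * Acoef f2 j s + Acoef f2 j (flip j s) * Acoef f1 j s
  = 'i * 2^-1 * (f1 j * f2 j - (cj (f1 j)) * (cj (f2 j))).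
Proof.
rewrite !Acoef_E.
transitivity (cc * cc * (Bc f1 j (flip j s) * Bc f2 j s + Bc f2 j (flip j s) * Bc f1 j s)).
  ring.
rewrite B_diag -cc2. ring.
Qed.

Lemma ccJ : cj cc = cc * - 'i.
Proof.
rewrite /cc; apply/eqP; rewrite eq_complex /=; apply/andP; split; apply/eqP; ring.
Qed.

Lemma B_adj l (f g : 'I_l -> C) (j : 'I_l) rho : g j = - 'i * (cj (f j)) ->
  Bc g j rho = - 'i * (cj (Bc f j (flip j rho))).
Proof.
move=> hg; rewrite /Bc flipL flipR leqnn ltnn spinN hg.
rewrite !(NcB, NcM, NcD, NcN) !ciN' !spinJ' !NcK.
have h4 := hiN R. ring: h4.
Qed.

Lemma A_adj l (f g : 'I_l -> C) (j : 'I_l) rho : g j = - 'i * (cj (f j)) ->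
  Acoef g j rho = (cj (Acoef f j (flip j rho))).
Proof.
move=> hg; rewrite !Acoef_E (@B_adj l f g j rho hg) NcM ccJ.
ring.
Qed.

Lemma chi_adj l (f g : 'I_l -> C) (hg : forall j, g j = - 'i * (cj (f j))) sigma rho :
  chi g sigma rho = (cj (chi f rho sigma)).
Proof.
rewrite !chi_eq Nc_sum; apply: eq_bigr => j _.
rewrite NcM Nc_nat flip_eq.
case: eqP => [->|_]; rewrite ?mul1r ?mul0r //.
by rewrite (@A_adj l f g j _ (hg j)) flipK.
Qed.

Lemma inner_adj l (A B : op R l) (h : forall sigma rho, B sigma rho = (cj (A rho sigma))) u v :
  inner (app A u) v = inner u (app B v).
Proof.
rewrite /inner /app.
under eq_bigr do rewrite Nc_sum mulr_suml.
rewrite exchange_big; apply: eq_bigr => s _.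
rewrite mulr_sumr; apply: eq_bigr => r _.
rewrite h NcM; ring.
Qed.

Lemma app_chi l (f : 'I_l -> C) (w : vec R l) sigma :
  app (chi f) w sigma = \sum_(j < l) Acoef f j (flip j sigma) * w (flip j sigma).
Proof.
rewrite /app.
under eq_bigr do rewrite chi_eq mulr_suml.
rewrite exchange_big; apply: eq_bigr => j _.
rewrite (bigD1 (flip j sigma)) //= flipK eqxx mul1r big1 ?addr0 //.
by move=> rho hr; rewrite flip_eq (negbTE hr) /= !mul0r.
Qed.

Lemma app2 l (f1 f2 : 'I_l -> C) (u : vec R l) sigma :
  app (chi f1) (app (chi f2) u) sigma =
  \sum_(j < l) \sum_(m < l) Acoef f1 j (flip j sigma) *
     (Acoef f2 m (flip m (flip j sigma)) * u (flip m (flip j sigma))).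
Proof.
rewrite app_chi; apply: eq_bigr => j _; by rewrite app_chi mulr_sumr.
Qed.

Lemma anticomm l (f1 f2 : 'I_l -> C) (u : vec R l) sigma :
  app (chi f1) (app (chi f2) u) sigma + app (chi f2) (app (chi f1) u) sigma
  = (\sum_(j < l) 'i * 2^-1 * (f1 j * f2 j - (cj (f1 j)) * (cj (f2 j)))) * u sigma.
Proof.
rewrite !app2 [X in _ + X]exchange_big /= -big_split /= mulr_suml.
apply: eq_bigr => j _.
rewrite -big_split /= (bigD1 j) //= big1 ?addr0.
  rewrite !flipK -(@A_diag l f1 f2 j sigma). ring.
move=> m hm.
rewrite [flip m (flip j sigma)]flipC.
have e1 : Acoef f2 m (flip j (flip m sigma)) = (if (m < j)%N then -1 else 1) * Acoef f2 m (flip m sigma).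
  by rewrite A_flip // eq_sym.
have e2 : Acoef f1 j (flip j (flip m sigma)) = (if (j < m)%N then -1 else 1) * Acoef f1 j (flip j sigma).
  by rewrite flipC A_flip.
rewrite e1 e2.
case: (ltngtP j m) => h; try ring.
by move/eqP: hm; case; apply: val_inj.
Qed.

Lemma re_sum (W : C) : (W + cj W) * 2^-1 = (complex.Re W)%:C.
Proof.
have -> : W + cj W = 2 * (complex.Re W)%:C.
  case: W => x y; apply/eqP; rewrite eq_complex /=. apply/andP; split; apply/eqP; ring.
rewrite mulrC mulrA mulVf ?mul1r //.
by rewrite pnatr_eq0.
Qed.

End Main.

Theorem proposition5p5 (R : realType) (a b : int) (ha : a < 0) (hb : 0 < b)
  (omega : R -> R) (F : R -> edge -> R[i]) :
  (* omega_k in ((k-1/2)pi/l, k pi/l) solves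
     cos((l+1/2) w)/cos((l-1/2) w) = 3 - 2 sqrt 2 *)
  (forall k : R, inK (ell a b) k ->
     (k - 2^-1) * pi / (ell a b)%:R < omega k < k * pi / (ell a b)%:R /\
     cos (((ell a b)%:R + 2^-1) * omega k) / cos (((ell a b)%:R - 2^-1) * omega k)
       = 3 - 2 * Num.sqrt 2) ->
  (* F_{+-k}: s-holomorphic, Riemann boundary values, F(z+ih) = lambda_{+-k}^h F(z),
     values in e^{-i pi/4} R_{>0} on the edges a + iy', f_{+-k} of unit norm *)
  (forall k : R, inPMK (ell a b) k ->
     s_holomorphic a b (F k) /\ riemann_bv a b (F k) /\ left_positive a (F k) /\
     innerH (fmode a b F k) (fmode a b F k) = 1) ->
  (forall k : R, inK (ell a b) k ->
     translation_eigen a b (F k) (lambda_of (omega k)) /\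
     translation_eigen a b (F (- k)) ((lambda_of (omega k))^-1)) ->
  (* known facts: (f_k) is orthonormal in H, and f_{-k} = -i conj(f_k) *)
  (forall k1 k2 : R, inPMK (ell a b) k1 -> inPMK (ell a b) k2 ->
     innerH (fmode a b F k1) (fmode a b F k2)
       = (k1 == k2)%:R) ->
  (forall (k : R) (j : 'I_(ell a b)), inPMK (ell a b) k ->
     fmode a b F (- k) j = - 'i * (fmode a b F k j)^*) ->
  (* conclusion *)
  (forall k : R, inPMK (ell a b) k ->
     forall u v : vec R (ell a b),
       inner (app (chi (fmode a b F k)) u) v
       = inner u (app (chi (fmode a b F (- k))) v)) /\
  (forall k1 k2 : R, inPMK (ell a b) k1 -> inPMK (ell a b) k2 ->
     forall (u : vec R (ell a b)) (sigma : state (ell a b)),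
       app (chi (fmode a b F k1))
           (app (chi (fmode a b F k2)) u) sigma
     + app (chi (fmode a b F k2))
           (app (chi (fmode a b F k1)) u) sigma
     = (k1 == - k2)%:R * u sigma).
Proof.
move=> _ _ _ horth hneg.
split.
- move=> k hk u v; apply: inner_adj => sigma rho.
  apply: chi_adj => j; exact: hneg.
- move=> k1 k2 h1 h2 u sigma.
  rewrite anticomm; congr (_ * _).
  have h2' : inPMK (ell a b) (- k2) by rewrite /inPMK opprK; case: h2; [right|left].
  set f1 := fmode a b F k1; set g := fmode a b F (- k2).
  have hf2 : forall j, fmode a b F k2 j = - 'i * cj (g j).
    move=> j; rewrite -{1}(opprK k2); exact: hneg.
  transitivity (\sum_(j < ell a b) (f1 j * cj (g j) + cj (f1 j * cj (g j))) * 2^-1).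
    apply: eq_bigr => j _; rewrite hf2 !NcM NcN ciN' !NcK; have h4 := hiN R; ring: h4.
  rewrite -mulr_suml big_split /= -Nc_sum re_sum.
  have := horth k1 (- k2) h1 h2'; rewrite /innerH => ->.
  by rewrite rmorph_nat.
Qed.
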